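(* Let $k$ be a field of characteristic $p>0$, let $n\ge2$ and $d\ge 3$ be integers, and let $V\subseteq k[\beta]$ be a $k$-subspace with $(\beta^n)\subseteq V$ and $\dim_kV/(\beta^n)=d$, such that $V/(\beta^n)$ has a basis given by the classes of polynomials $$p_i=\beta^{\nu_i}+\sum_{j\ge1}p_{i,j}\beta^{\nu_i+j}\quad(i=1,\dots,d,\ p_{i,j}\in k)$$ with $0=\nu_1<1=\nu_2<\nu_3<\cdots<\nu_d$ and $p_{1,1}=0$. Assume $\nu_d\equiv 1\pmod p$, $p_{d,1}-p_{2,1}\ne0$, and that the collection $$\{\nu_d+1\}\cup\{\nu_d+\nu_j-1: j=3,\dots,d\}\cup\{\nu_d+\nu_j+1: j=2,\dots,d\}$$ consists of $2(d-1)$ distinct integers, all smaller than $n$. If $n\neq0$ in $k$, then $\Lambda=kQ/I(n;n,n;V)$ satisfies $\mathrm{HH}^1(\Lambda)=0$.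
   Context: $Q$ is the quiver with vertices $1,2,3$ and arrows $\alpha\colon 2\to1$, $\beta\colon 2\to 2$, $\gamma\colon 3\to 2$; $kQ$ is generated by pairwise orthogonal idempotents $e_1,e_2,e_3$ (sum $1$) and $\alpha,\beta,\gamma$ with $e_1\alpha=\alpha=\alpha e_2$, $e_2\beta=\beta=\beta e_2$, $e_3\gamma=\gamma=\gamma e_2$, $\gamma\alpha=\beta\alpha=\gamma\beta=0$; for $v=\sum_iv_i\beta^i\in k[\beta]$, $\alpha v\gamma=\sum_iv_i\alpha\beta^i\gamma$. $I(n;n,n;V)$ is the two-sided ideal of $kQ$ generated by $\alpha\beta^{n}$, $\beta^n$, $\beta^{n}\gamma$ and all $\alpha v\gamma$, $v\in V$. $\mathrm{HH}^1(\Lambda)=\mathrm{Der}_k(\Lambda,\Lambda)/\mathrm{Inn}(\Lambda)$. *)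

(* Defs.v *)
From mathcomp Require Import all_boot all_order all_algebra.
Set Implicit Arguments. Unset Strict Implicit. Unset Printing Implicit Defensive.
Import GRing.Theory.
Local Open Scope ring_scope.

(* The path algebra kQ of the quiver Q: vertices 1,2,3, arrows
   alpha : 2 -> 1, beta : 2 -> 2, gamma : 3 -> 2 (composition written as in
   the paper: e1 alpha = alpha = alpha e2, etc.).  Its paths are
   e1, e3, beta^i (i >= 0, beta^0 = e2), alpha beta^i, beta^i gamma,
   alpha beta^i gamma (i >= 0), so every element of kQ is uniquely
     c1 e1 + c3 e3 + B(beta) + alpha A(beta) + G(beta) gamma + alpha AG(beta) gamma
   with c1, c3 in k and B, A, G, AG in k[beta] (polynomials). *)
Record kQ (k : fieldType) := KQ {
  kq_e1 : k;
  kq_e3 : k;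
  kq_B  : {poly k};
  kq_A  : {poly k};
  kq_G  : {poly k};
  kq_AG : {poly k} }.

Section KQ.
Variable k : fieldType.
Local Notation T := (kQ k).

Definition kq0 : T := KQ 0 0 0 0 0 0.
Definition kq1 : T := KQ 1 1 1 0 0 0.
Definition kq_add (x y : T) : T :=
  KQ (kq_e1 x + kq_e1 y) (kq_e3 x + kq_e3 y) (kq_B x + kq_B y)
     (kq_A x + kq_A y) (kq_G x + kq_G y) (kq_AG x + kq_AG y).
Definition kq_scale (c : k) (x : T) : T :=
  KQ (c * kq_e1 x) (c * kq_e3 x) (c *: kq_B x) (c *: kq_A x) (c *: kq_G x)
     (c *: kq_AG x).
Definition kq_sub (x y : T) : T := kq_add x (kq_scale (-1) y).
Definition kq_mul (x y : T) : T :=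
  KQ (kq_e1 x * kq_e1 y)
     (kq_e3 x * kq_e3 y)
     (kq_B x * kq_B y)
     (kq_e1 x *: kq_A y + kq_A x * kq_B y)
     (kq_B x * kq_G y + kq_e3 y *: kq_G x)
     (kq_e1 x *: kq_AG y + kq_A x * kq_G y + kq_e3 y *: kq_AG x).

Definition kq_e1v : T := KQ 1 0 0 0 0 0.
Definition kq_e2v : T := KQ 0 0 1 0 0 0.
Definition kq_e3v : T := KQ 0 1 0 0 0 0.
Definition kq_alpha : T := KQ 0 0 0 1 0 0.
Definition kq_beta : T := KQ 0 0 'X 0 0 0.
Definition kq_gamma : T := KQ 0 0 0 0 1 0.
Definition kq_poly_beta (v : {poly k}) : T := KQ 0 0 v 0 0 0.
Definition kq_avg (v : {poly k}) : T :=
  kq_mul kq_alpha (kq_mul (kq_poly_beta v) kq_gamma).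

Definition I_gens (n : nat) (V : {poly k} -> Prop) (x : T) : Prop :=
  x = kq_mul kq_alpha (kq_poly_beta 'X^n) \/ x = kq_poly_beta 'X^n \/
  x = kq_mul (kq_poly_beta 'X^n) kq_gamma \/
  exists2 v, V v & x = kq_avg v.

Definition two_sided_ideal (J : T -> Prop) : Prop :=
  [/\ J kq0, (forall x y, J x -> J y -> J (kq_add x y)),
      (forall c x, J x -> J (kq_scale c x)),
      (forall a x, J x -> J (kq_mul a x)) &
      (forall a x, J x -> J (kq_mul x a))].

Definition gen_ideal (S : T -> Prop) (x : T) : Prop :=
  forall J, two_sided_ideal J -> (forall s, S s -> J s) -> J x.

Definition I_nnV (n : nat) (V : {poly k} -> Prop) : T -> Prop :=
  gen_ideal (I_gens n V).

(* Lambda = kQ / I.  A k-linear map Lambda -> Lambda is given by a map on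
   representatives f : kQ -> kQ compatible with congruence mod I. *)
Definition is_derivation_mod (I : T -> Prop) (f : T -> T) : Prop :=
  [/\ (forall x y, I (kq_sub x y) -> I (kq_sub (f x) (f y))),
      (forall c x y, I (kq_sub (f (kq_add (kq_scale c x) y))
                               (kq_add (kq_scale c (f x)) (f y)))) &
      (forall x y, I (kq_sub (f (kq_mul x y))
                             (kq_add (kq_mul (f x) y) (kq_mul x (f y)))))].

Definition is_inner_mod (I : T -> Prop) (f : T -> T) : Prop :=
  exists a, forall x, I (kq_sub (f x) (kq_sub (kq_mul a x) (kq_mul x a))).

Definition HH1_vanishes (I : T -> Prop) : Prop :=
  forall f, is_derivation_mod I f -> is_inner_mod I f.

End KQ.

(* Main.v *)
Require Import Defs.
From mathcomp Require Import all_boot all_order all_algebra.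
From mathcomp Require Import zify ring.
Import GRing.Theory.
Set Implicit Arguments. Unset Strict Implicit. Unset Printing Implicit Defensive.
Local Open Scope ring_scope.


Section Help.
Variable k : fieldType.
Implicit Types p q : {poly k}.

Lemma coefM_nat p q m : (p * q)`_m = \sum_(0 <= j < m.+1) p`_j * q`_(m - j).
Proof. by rewrite coefM big_mkord. Qed.

Lemma coefM_lowz p q s t m : (forall j, (j < s)%N -> p`_j = 0) ->
  (forall j, (j < t)%N -> q`_j = 0) -> (m < s + t)%N -> (p * q)`_m = 0.
Proof.
move=> hp hq hm; rewrite coefM_nat big1_seq // => j /andP[_].
rewrite mem_index_iota => /andP[_ hj].
case: (ltnP j s) => hjs; first by rewrite hp ?mul0r.
by rewrite hq ?mulr0 //; lia.
Qed.

Lemma coefM_low0 p q s t : (forall j, (j < s)%N -> p`_j = 0) ->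
  (forall j, (j < t)%N -> q`_j = 0) -> (p * q)`_(s + t) = p`_s * q`_t.
Proof.
move=> hp hq; rewrite coefM_nat (big_cat_nat _ (n:=s)) //=; last by lia.
rewrite big1_seq ?add0r; last first.
  by move=> j /andP[_]; rewrite mem_index_iota => /andP[_ hj]; rewrite hp ?mul0r.
rewrite big_ltn; last by lia.
rewrite big1_seq ?addr0; last first.
  move=> j /andP[_]; rewrite mem_index_iota => /andP[hj1 hj2].
  by rewrite hq ?mulr0 //; lia.
by rewrite addKn.
Qed.

Lemma coefM_low1 p q s t : (forall j, (j < s)%N -> p`_j = 0) ->
  (forall j, (j < t)%N -> q`_j = 0) ->
  (p * q)`_(s + t).+1 = p`_s * q`_t.+1 + p`_s.+1 * q`_t.
Proof.
move=> hp hq; rewrite coefM_nat (big_cat_nat _ (n:=s)) //=; last by lia.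
rewrite big1_seq ?add0r; last first.
  by move=> j /andP[_]; rewrite mem_index_iota => /andP[_ hj]; rewrite hp ?mul0r.
rewrite big_ltn; last by lia.
rewrite big_ltn; last by lia.
rewrite big1_seq ?addr0; last first.
  move=> j /andP[_]; rewrite mem_index_iota => /andP[hj1 hj2].
  by rewrite hq ?mulr0 //; lia.
have -> : ((s + t).+1 - s = t.+1)%N by lia.
by have -> : ((s + t).+1 - s.+1 = t)%N by lia.
Qed.
Lemma coefM_at p q s t m : (forall j, (j < s)%N -> p`_j = 0) ->
  (forall j, (j < t)%N -> q`_j = 0) -> m = (s + t)%N -> (p * q)`_m = p`_s * q`_t.
Proof. by move=> hp hq ->; apply: coefM_low0. Qed.
Lemma coefM_at1 p q s t m : (forall j, (j < s)%N -> p`_j = 0) ->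
  (forall j, (j < t)%N -> q`_j = 0) -> m = (s + t).+1%N ->
  (p * q)`_m = p`_s * q`_t.+1 + p`_s.+1 * q`_t.
Proof. by move=> hp hq ->; apply: coefM_low1. Qed.
End Help.

Section Core.
Variables (k : fieldType) (n d : nat) (V : {poly k} -> Prop) (nu : nat -> nat)
  (P : nat -> {poly k}).
Hypothesis Vadd : forall u v, V u -> V v -> V (u + v).
Hypothesis Vscale : forall (c : k) v, V v -> V (c *: v).
Hypothesis VXn : forall w, V (w * 'X^n).
Hypothesis Pform : forall i, (1 <= i <= d)%N ->
     (forall m, (m < nu i)%N -> (P i)`_m = 0) /\ (P i)`_(nu i) = 1.
Hypothesis PV : forall i, (1 <= i <= d)%N -> V (P i).
Hypothesis Pspan : forall v, V v -> exists (c : nat -> k) (w : {poly k}),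
      v = \sum_(1 <= i < d.+1) c i *: P i + w * 'X^n.
Hypothesis nu1 : nu 1%N = 0%N.
Hypothesis nu2 : nu 2%N = 1%N.
Hypothesis numon : forall i, (2 <= i < d)%N -> (nu i < nu i.+1)%N.
Hypothesis hd3 : (3 <= d)%N.
Hypothesis hnd : (2 * nu d + 1 < n)%N.

Lemma numono i j : (1 <= i)%N -> (i < j)%N -> (j <= d)%N -> (nu i < nu j)%N.
Proof.
move=> hi; elim: j => [|j IH] //= hij hj.
case: (ltngtP i j) => [hlt||heq].
- apply: (ltn_trans (IH hlt (ltnW hj))).
  have [j1|j1] := leqP j 1%N.
  + lia.
  + case: (j =P 1%N) => [->|hj1]; first by rewrite nu1 nu2.
    by apply: numon; lia.
- lia.
- subst j. case: (i =P 1%N) => [->|hi1]; first by rewrite nu1 nu2.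
  by apply: numon; lia.
Qed.

Lemma numono' i j : (1 <= i)%N -> (i <= j)%N -> (j <= d)%N -> (nu i <= nu j)%N.
Proof.
move=> h1 h2 h3; case: (ltngtP i j) => [h|h|->] //; last by lia.
by apply: ltnW; apply: numono.
Qed.

Lemma nu_lt_n i : (1 <= i <= d)%N -> (nu i < n)%N.
Proof. move=> /andP[h1 h2]; have := numono' h1 h2 (leqnn d); lia. Qed.

Lemma lowest w kk : V w -> (kk < n)%N -> (forall m, (m < kk)%N -> w`_m = 0) ->
  w`_kk != 0 -> exists2 i, (1 <= i <= d)%N & nu i = kk.
Proof.
move=> Vw hk.
have [c [w' ->]] := Pspan Vw.
set S := \sum_(1 <= i < d.+1) c i *: P i.
have [ex|nex] := boolP [exists i : 'I_d.+1, (1 <= i)%N && (c i != 0)].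
- have exP : exists i, (1 <= i <= d)%N && (c i != 0).
    move/existsP: ex => [i /andP[h1 h2]]; exists i; rewrite h1 h2 /=.
    by have := ltn_ord i; lia.
  case: (ex_minnP exP) => i0 /andP[/andP[hi1 hi2] hci0] hmin.
  have coefS : forall m, (m <= nu i0)%N -> (S + w' * 'X^n)`_m = c i0 * (P i0)`_m.
    move=> m hm.
    have hmn : (m < n)%N by have := nu_lt_n (i := i0); lia.
    rewrite coefD coefMXn hmn addr0 /S coef_sum.
    rewrite (big_cat_nat _ (n:=i0)) //=; try lia.
    rewrite (big_ltn (m:=i0)); last by lia.
    rewrite big1_seq ?add0r; last first.
      move=> i /andP[_]; rewrite mem_index_iota => /andP[h1 h2].
      case: (c i =P 0) => [->|/eqP hc]; first by rewrite coefZ mul0r.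
      have : (i0 <= i)%N by apply: hmin; rewrite hc; lia.
      lia.
    rewrite big1_seq ?addr0 ?coefZ //.
    move=> i /andP[_]; rewrite mem_index_iota => /andP[h1 h2].
    rewrite coefZ (proj1 (Pform (i:=i) _)) ?mulr0 //; first by lia.
    by have := numono hi1 h1 (ltnSE h2); lia.
  move=> hlow hnz; exists i0; first by rewrite hi1 hi2.
  case: (ltngtP (nu i0) kk) => [hlt|hgt|//].
  + have := hlow _ hlt; rewrite coefS // (proj2 (Pform _)) ?hi1 ?hi2 // mulr1.
    by move=> h; rewrite h eqxx in hci0.
  + move: hnz; rewrite coefS; last by lia.
    by rewrite (proj1 (Pform _)) ?hi1 ?hi2 // mulr0 eqxx.
- have -> : S = 0.
    rewrite /S big1_seq // => i /andP[_]; rewrite mem_index_iota => /andP[h1 h2].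
    case: (c i =P 0) => [->|/eqP hc]; first by rewrite scale0r.
    exfalso; move/negP: nex; apply; apply/existsP; exists (Ordinal h2).
    by rewrite /= h1 hc.
  by move=> _; rewrite add0r coefMXn hk eqxx.
Qed.

Definition dX (p : {poly k}) := forall m, (m < n)%N -> p`_m = 0.

Lemma zero_above w : V w -> (forall m, (m <= nu d)%N -> w`_m = 0) -> dX w.
Proof.
move=> Vw hz m hm; apply/eqP; apply/negPn/negP => hnz.
have exP : exists m, (m < n)%N && (w`_m != 0) by exists m; rewrite hm hnz.
case: (ex_minnP exP) => m0 /andP[hm0 hnz0] hmin.
have hl : forall m1, (m1 < m0)%N -> w`_m1 = 0.
  move=> m1 hm1; apply/eqP; apply/negPn/negP => h1.
  have := hmin m1; rewrite h1; have : (m1 < n)%N by lia. by move=> -> /(_ isT); lia.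
have [i hi hnu] := lowest Vw hm0 hl hnz0.
move: hnz0; rewrite hz ?eqxx //.
by rewrite -hnu; apply: numono' => //; lia.
Qed.

Hypothesis nud1 : (nu d)%:R = 1 :> k.
Hypothesis hdiff : (P d)`_(nu d + 1) - (P 2%N)`_2 != 0.
Hypothesis hgap : forall i j, (1 <= i <= d)%N -> (1 <= j <= d)%N -> nu j <> (nu i + 2)%N.

Lemma core (h b : {poly k}) : b`_0 = 0 ->
  (forall v, V v -> V (h * v + b * v^`())) -> exists c : k, dX (h - c%:P) /\ dX b.
Proof.
move=> b0 VT.
have hd1 : (1 <= d <= d)%N by lia.
have h11 : (1 <= 1 <= d)%N by lia.
have h21 : (1 <= 2 <= d)%N by lia.
have [Pdz Pd1] := Pform hd1.
have [P1z P11] := Pform h11.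
have [P2z P21] := Pform h21.
rewrite nu1 in P1z P11. rewrite nu2 in P2z P21.
have nud_ge1 : (1 <= nu d)%N by rewrite -nu2; apply: numono' => //; lia.
set c := (h * P d + b * (P d)^`())`_(nu d).
exists c; set h1 := h - c%:P.
have VT1 : forall v, V v -> V (h1 * v + b * v^`()).
  move=> v Vv; have -> : h1 * v + b * v^`() = (h * v + b * v^`()) + (- c) *: v.
    by rewrite /h1 -mul_polyC polyCN; ring.
  by apply: Vadd; [apply: VT | apply: Vscale].
have Pdd z : (z < (nu d).-1)%N -> (P d)^`()`_z = 0.
  by move=> hz; rewrite coef_deriv Pdz ?mul0rn //; lia.
have Pdd1 : (P d)^`()`_((nu d).-1) = 1.
  by rewrite coef_deriv prednK // Pd1; exact: nud1.
have Pdd2 : (P d)^`()`_(nu d) = (P d)`_(nu d + 1) *+ 2.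
  rewrite coef_deriv -mulr_natr -[RHS]mulr_natr addn1; congr (_ * _).
  by rewrite -addn1 natrD nud1.
have P2d0 : (P 2%N)^`()`_0 = 1 by rewrite coef_deriv P21.
have P2d1 : (P 2%N)^`()`_1 = (P 2%N)`_2 *+ 2 by rewrite coef_deriv.
have nz0 : forall (q : {poly k}) j, (j < 0)%N -> q`_j = 0 by [].
have E0 : dX (h1 * P d + b * (P d)^`()).
  apply: zero_above; first exact: VT1 _ (PV hd1).
  move=> m hm.
  have hb1 : forall j, (j < 1)%N -> b`_j = 0 by move=> j; rewrite ltnS leqn0 => /eqP ->.
  have [hlt| ->] : (m < nu d)%N \/ m = nu d by lia.
  - rewrite coefD (@coefM_lowz _ _ _ 0 (nu d)) ?add0r //.
    by rewrite (@coefM_lowz _ _ _ 1 (nu d).-1) //; lia.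
  - rewrite coefD (coefM_at (nz0 h1) Pdz) // (coefM_at hb1 Pdd); last by lia.
    rewrite Pdd1 Pd1 mulr1 mulr1 /h1 coefB coefC /=.
    rewrite /c coefD (coefM_at (nz0 h) Pdz) // (coefM_at hb1 Pdd); last by lia.
    rewrite Pdd1 Pd1; ring.
have hdiff' := hdiff.
rewrite addn1 in hdiff' Pdd2.
set q1 := (P d)`_(nu d).+1 in hdiff' Pdd2.
set r1 := (P 2%N)`_2 in hdiff' P2d1.
have step2 : forall s, (s < n - nu d)%N -> h1`_s = 0 /\ b`_s.+1 = 0.
  elim/ltn_ind => s IH hs.
  have hz : forall j, (j < s)%N -> h1`_j = 0.
    by move=> j hj; have hjn : (j < n - nu d)%N := ltac:(lia); case: (IH j hj hjn).
  have bz : forall j, (j < s.+1)%N -> b`_j = 0.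
    case=> [//|j] hj; have hjn : (j < n - nu d)%N by lia.
    by case: (IH j hj hjn).
  have EqA : h1`_s + b`_s.+1 = 0.
    have hi : (nu d + s < n)%N by lia.
    have := E0 _ hi; rewrite coefD (coefM_at hz Pdz) ?(coefM_at bz Pdd); try lia.
    by rewrite Pd1 Pdd1 !mulr1.
  have eb1 : b`_s.+1 = - h1`_s by apply/eqP; rewrite -addr_eq0 addrC EqA.
  suff h1s : h1`_s = 0 by split=> //; rewrite eb1 h1s oppr0.
  apply/eqP/negPn/negP => hnz.
  have [i hi hnui] : exists2 i, (1 <= i <= d)%N & nu i = s.
    apply: (lowest (VT1 _ (PV h11))); first by lia.
      move=> m hm; rewrite coefD (coefM_lowz hz P1z) ?(coefM_lowz bz (nz0 _)) ?addr0 //; lia.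
    rewrite coefD (coefM_at hz P1z) ?(coefM_lowz bz (nz0 _)) ?addr0 ?P11 ?mulr1 //; lia.
  have hsd : (s <= nu d)%N by rewrite -hnui; apply: numono'; lia.
  have A' : h1`_s * q1 + h1`_s.+1 + (b`_s.+1 * (q1 *+ 2) + b`_s.+2) = 0.
    have hi' : ((nu d + s).+1 < n)%N by lia.
    have := E0 _ hi'; rewrite coefD (coefM_at1 hz Pdz) ?(coefM_at1 bz Pdd); try lia.
    by rewrite prednK // Pdd2 Pdd1 Pd1 !mulr1.
  have eb2 : b`_s.+2 = - (h1`_s * q1 + h1`_s.+1 + b`_s.+1 * (q1 *+ 2)).
    by rewrite addrA in A'; apply/eqP; rewrite -addr_eq0 addrC A'.
  have [j hj hnuj] : exists2 j, (1 <= j <= d)%N & nu j = s.+2.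
    apply: (lowest (VT1 _ (PV h21))); first by lia.
      move=> m hm; have [hm1|->] : (m < s.+1)%N \/ m = s.+1 by lia.
        rewrite coefD (coefM_lowz hz P2z) ?(coefM_lowz bz (nz0 _)) ?addr0 //; lia.
      rewrite coefD (coefM_at hz P2z) ?(coefM_at bz (nz0 _)) ?P21 ?P2d0 ?mulr1 //; lia.
    rewrite coefD (coefM_at1 hz P2z) ?(coefM_at1 bz (nz0 _)) ?P21 ?P2d0 ?P2d1 ?mulr1; try lia.
    rewrite eb2 eb1.
    have -> : h1`_s * r1 + h1`_s.+1 + (- h1`_s * (r1 *+ 2) -
      (h1`_s * q1 + h1`_s.+1 + - h1`_s * (q1 *+ 2))) = h1`_s * (q1 - r1) by ring.
    rewrite mulf_eq0 negb_or hnz /=.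
    by [].
  by apply: (hgap hi hj); rewrite hnuj hnui; lia.
have step3 : forall s, (s < n)%N -> h1`_s = 0 /\ b`_s = 0.
  elim/ltn_ind => s IH hs.
  have [hsm|hsm] := ltnP s (n - nu d).
    split; first by case: (step2 s hsm).
    by case: s hs IH hsm => [//|s] hs IH hsm; case: (step2 s); first lia.
  have hz : forall j, (j < s)%N -> h1`_j = 0.
    by move=> j hj; have hjn : (j < n)%N := ltac:(lia); case: (IH j hj hjn).
  have bz : forall j, (j < s)%N -> b`_j = 0.
    by move=> j hj; have hjn : (j < n)%N := ltac:(lia); case: (IH j hj hjn).
  have bs : b`_s = 0.
    have D2 : dX (h1 * P 2%N + b * (P 2%N)^`()).
      apply: zero_above; first exact: VT1 _ (PV h21).
      move=> m hm; rewrite coefD (coefM_lowz hz P2z) ?(coefM_lowz bz (nz0 _)) ?addr0 //; lia.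
    have := D2 s hs; rewrite coefD (coefM_lowz hz P2z) ?(coefM_at bz (nz0 _)) ?P2d0 ?add0r ?mulr1 //; lia.
  have bz' : forall j, (j < s.+1)%N -> b`_j = 0.
    move=> j hj; have [hj'|->] : (j < s)%N \/ j = s by lia.
      by apply: bz.
    by [].
  split=> //.
  have D1 : dX (h1 * P 1%N + b * (P 1%N)^`()).
    apply: zero_above; first exact: VT1 _ (PV h11).
    move=> m hm; rewrite coefD (coefM_lowz hz P1z) ?(coefM_lowz bz' (nz0 _)) ?addr0 //; lia.
  have := D1 s hs; rewrite coefD (coefM_at hz P1z) ?(coefM_lowz bz' (nz0 _)) ?P11 ?addr0 ?mulr1 //; lia.
by split=> m hm; case: (step3 m hm).
Qed.
End Core.

Lemma kq_ext (k : fieldType) (x y : kQ k) : kq_e1 x = kq_e1 y -> kq_e3 x = kq_e3 y ->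
  kq_B x = kq_B y -> kq_A x = kq_A y -> kq_G x = kq_G y -> kq_AG x = kq_AG y -> x = y.
Proof. by case: x; case: y => /= ?????? ?????? -> -> -> -> -> ->. Qed.

Ltac kq := apply: kq_ext => /=;
  rewrite -?mul_polyC ?polyCM ?polyCD ?polyCN ?polyCB ?polyC1 ?polyC0; ring.

Section Alg.
Variables (k : fieldType) (n : nat) (V : {poly k} -> Prop).
Hypothesis Vadd : forall u v, V u -> V v -> V (u + v).
Hypothesis Vscale : forall (c : k) v, V v -> V (c *: v).
Hypothesis VXn : forall w, V (w * 'X^n).
Local Notation T := (kQ k).
Local Notation dX := (@dX k n).

Lemma dX0 : dX 0. Proof. by move=> m _; rewrite coef0. Qed.
Lemma dXD p q : dX p -> dX q -> dX (p + q).
Proof. by move=> hp hq m hm; rewrite coefD hp ?hq ?addr0. Qed.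
Lemma dXMl p q : dX q -> dX (p * q).
Proof.
move=> hq m hm; rewrite coefM big1 // => j _; rewrite hq ?mulr0 //.
by have := ltn_ord j; lia.
Qed.
Lemma dXMr p q : dX p -> dX (p * q).
Proof. by rewrite mulrC; apply: dXMl. Qed.
Lemma dXZ (c : k) p : dX p -> dX (c *: p).
Proof. by rewrite -mul_polyC; apply: dXMl. Qed.
Lemma dX_eq p q : dX p -> p = q -> dX q. Proof. by move=> h <-. Qed.
Lemma dXV p : dX p -> V p.
Proof.
move=> hp; rewrite -(poly_take_drop n p).
have -> : take_poly n p = 0.
  by apply/polyP => i; rewrite coef_take_poly coef0; case: ifP => // /hp.
by rewrite add0r.
Qed.
Lemma V0 : V 0. Proof. by rewrite -(mul0r 'X^n). Qed.
Lemma V_eq p q : V p -> p = q -> V q. Proof. by move=> h <-. Qed.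
Lemma VN p : V p -> V (- p).
Proof. by move=> h; rewrite -scaleN1r; apply: Vscale. Qed.
Lemma VD_dX p q : V p -> dX q -> V (p + q).
Proof. by move=> hp hq; apply: Vadd => //; apply: dXV. Qed.

Inductive Iex (x : T) : Prop := IexI of kq_e1 x = 0 & kq_e3 x = 0 & dX (kq_B x) &
  dX (kq_A x) & dX (kq_G x) & V (kq_AG x).

Lemma Iex_by x y : x = y -> Iex y -> Iex x. Proof. by move=> ->. Qed.
Lemma Iex0 : Iex (kq0 k). Proof. by split=> //=; [apply: dX0|apply: dX0|apply: dX0|apply: V0]. Qed.
Lemma IexD x y : Iex x -> Iex y -> Iex (kq_add x y).
Proof.
case=> h1 h2 h3 h4 h5 h6; case=> g1 g2 g3 g4 g5 g6; split=> /=.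
- by rewrite h1 g1 addr0.
- by rewrite h2 g2 addr0.
- exact: dXD.
- exact: dXD.
- exact: dXD.
- exact: Vadd.
Qed.
Lemma IexZ c x : Iex x -> Iex (kq_scale c x).
Proof.
case=> h1 h2 h3 h4 h5 h6; split=> /=.
- by rewrite h1 mulr0.
- by rewrite h2 mulr0.
- exact: dXZ.
- exact: dXZ.
- exact: dXZ.
- exact: Vscale.
Qed.
Lemma IexMl a x : Iex x -> Iex (kq_mul a x).
Proof.
case=> h1 h2 h3 h4 h5 h6; split=> /=.
- by rewrite h1 mulr0.
- by rewrite h2 mulr0.
- exact: dXMl.
- by apply: dXD; [apply: dXZ | apply: dXMl].
- by rewrite h2 scale0r addr0; apply: dXMl.
- rewrite h2 scale0r addr0; apply: Vadd; first exact: Vscale.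
  by apply: dXV; apply: dXMl.
Qed.
Lemma IexMr a x : Iex x -> Iex (kq_mul x a).
Proof.
case=> h1 h2 h3 h4 h5 h6; split=> /=.
- by rewrite h1 mul0r.
- by rewrite h2 mul0r.
- exact: dXMr.
- by rewrite h1 scale0r add0r; apply: dXMr.
- by apply: dXD; [apply: dXMr | apply: dXZ].
- rewrite h1 scale0r add0r; apply: Vadd; last exact: Vscale.
  by apply: dXV; apply: dXMr.
Qed.
Lemma IexB x y : Iex x -> Iex y -> Iex (kq_sub x y).
Proof. by move=> hx hy; apply: IexD => //; apply: IexZ. Qed.

Lemma Iex_ideal : two_sided_ideal Iex.
Proof.
split; [exact: Iex0 | exact: IexD | exact: IexZ | exact: IexMl | exact: IexMr].
Qed.

Lemma gen_ideal_ideal (S : T -> Prop) : two_sided_ideal (gen_ideal S).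
Proof.
split.
- by move=> J [].
- by move=> x y hx hy J hJ hS; case: (hJ) => _ hD _ _ _; apply: hD; [apply: hx|apply: hy].
- by move=> c x hx J hJ hS; case: (hJ) => _ _ hZ _ _; apply: hZ; apply: hx.
- by move=> a x hx J hJ hS; case: (hJ) => _ _ _ hl _; apply: hl; apply: hx.
- by move=> a x hx J hJ hS; case: (hJ) => _ _ _ _ hr; apply: hr; apply: hx.
Qed.

Lemma gens_Iex x : I_gens n V x -> Iex x.
Proof.
have dXXn : dX 'X^n by move=> m hm; rewrite coefXn; case: eqP => //; lia.
have dX0' : dX 0 := dX0.
case=> [->|[->|[->|[v Vv ->]]]]; split; rewrite /= ?(scale0r, scaler0, add0r, addr0, mul1r, mul0r, mulr1, mulr0) //.
all: try exact: dX0'.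
all: try exact: V0.
all: try exact: dXXn.
Qed.

Definition pb (v : {poly k}) : T := kq_poly_beta v.

Lemma I_iff x : I_nnV n V x <-> Iex x.
Proof.
split.
  by move=> hx; apply: hx; [exact: Iex_ideal | exact: gens_Iex].
case=> h1 h2 h3 h4 h5 h6.
have decomp p : dX p -> p = drop_poly n p * 'X^n.
  move=> hp; rewrite -{1}(poly_take_drop n p).
  have -> : take_poly n p = 0.
    by apply/polyP => i; rewrite coef_take_poly coef0; case: ifP => // /hp.
  by rewrite add0r.
have hI := gen_ideal_ideal (I_gens n V).
case: hI => i0 hAdd iZ hLm hRm.
have gen s : I_gens n V s -> I_nnV n V s by move=> hs J _ hJ; apply: hJ.
set wB := drop_poly n (kq_B x); set wA := drop_poly n (kq_A x); set wG := drop_poly n (kq_G x).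
have -> : x = kq_add (kq_add (kq_add (kq_mul (pb wB) (pb 'X^n))
     (kq_mul (kq_mul (kq_alpha k) (pb 'X^n)) (pb wA)))
     (kq_mul (pb wG) (kq_mul (pb 'X^n) (kq_gamma k)))) (kq_avg (kq_AG x)).
  apply: kq_ext => /=; rewrite ?(scale0r, scaler0, add0r, addr0, mul1r, mul0r, mulr1, mulr0) //.
  all: try exact: h1; try exact: h2; try exact: (decomp _ h3); try exact: (decomp _ h5).
  by rewrite mulrC; exact: (decomp _ h4).
apply: (hAdd _ _); last by apply: (gen _); right; right; right; exists (kq_AG x).
apply: (hAdd _ _); last by apply: (hLm _ _); apply: (gen _); right; right; left.
apply: (hAdd _ _); last by apply: (hRm _ _); apply: (gen _); left.
by apply: (hLm _ _); apply: (gen _); right; left.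
Qed.

Definition derI (g : T -> T) := is_derivation_mod Iex g.

Lemma der_of f : is_derivation_mod (I_nnV n V) f -> derI f.
Proof.
case=> hc hl hm; split.
- by move=> x y /I_iff h; apply/I_iff; apply: hc.
- by move=> c x y; apply/I_iff; apply: hl.
- by move=> x y; apply/I_iff; apply: hm.
Qed.

Definition br (a x : T) := kq_sub (kq_mul a x) (kq_mul x a).

Section Der.
Variable g : T -> T.
Hypothesis dg : derI g.

Lemma g_compat x y : Iex (kq_sub x y) -> Iex (kq_sub (g x) (g y)).
Proof. by case: dg => h _ _; apply: h. Qed.
Lemma g_leib x y : Iex (kq_sub (g (kq_mul x y)) (kq_add (kq_mul (g x) y) (kq_mul x (g y)))).
Proof. by case: dg => _ _ h; apply: h. Qed.
Lemma g0 : Iex (g (kq0 k)).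
Proof.
have := g_leib (kq0 k) (kq0 k).
have -> : kq_mul (kq0 k) (kq0 k) = kq0 k by kq.
by apply: Iex_by; kq.
Qed.
Lemma g_add x y : Iex (kq_sub (g (kq_add x y)) (kq_add (g x) (g y))).
Proof.
case: dg => _ hl _; have := hl 1 x y.
have -> : kq_add (kq_scale 1 x) y = kq_add x y by kq.
by apply: Iex_by; kq.
Qed.
Lemma g_scale c x : Iex (kq_sub (g (kq_scale c x)) (kq_scale c (g x))).
Proof.
case: dg => _ hl _; have := hl c x (kq0 k).
have -> : kq_add (kq_scale c x) (kq0 k) = kq_scale c x by kq.
move=> h; apply: (Iex_by (y := kq_add (kq_sub (g (kq_scale c x))
  (kq_add (kq_scale c (g x)) (g (kq0 k)))) (g (kq0 k)))); first by kq.
by apply: IexD => //; apply: g0.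
Qed.
Lemma g_Iex x : Iex x -> Iex (g x).
Proof.
move=> hx; have := g_compat (x := x) (y := kq0 k).
have -> : kq_sub x (kq0 k) = x by kq.
move=> /(_ hx) h; apply: (Iex_by (y := kq_add (kq_sub (g x) (g (kq0 k))) (g (kq0 k)))).
  by kq.
by apply: IexD => //; apply: g0.
Qed.

Lemma leibE x y z : kq_mul x y = z ->
  Iex (kq_sub (g z) (kq_add (kq_mul (g x) y) (kq_mul x (g y)))).
Proof. by move=> <-; apply: g_leib. Qed.
Lemma leib0 x y : kq_mul x y = kq0 k ->
  Iex (kq_add (kq_mul (g x) y) (kq_mul x (g y))).
Proof.
move=> e; have := leibE e => h.
apply: (Iex_by (y := kq_sub (g (kq0 k)) (kq_sub (g (kq0 k))
  (kq_add (kq_mul (g x) y) (kq_mul x (g y)))))); first by kq.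
by apply: IexB => //; apply: g0.
Qed.

Lemma pb_ind (Q : {poly k} -> Prop) : Q 0 ->
  (forall p c, Q p -> Q (p * 'X + c%:P)) -> forall p, Q p.
Proof. by move=> h0 hs; apply: poly_ind. Qed.

Lemma der_closure : Iex (g (kq_e1v k)) -> Iex (g (kq_e2v k)) -> Iex (g (kq_e3v k)) ->
  Iex (g (kq_alpha k)) -> Iex (g (kq_beta k)) -> Iex (g (kq_gamma k)) ->
  forall x, Iex (g x).
Proof.
move=> H1 H2 H3 Ha Hb Hc.
have SD x y : Iex (g x) -> Iex (g y) -> Iex (g (kq_add x y)).
  move=> hx hy; apply: (Iex_by (y := kq_add (kq_sub (g (kq_add x y)) (kq_add (g x) (g y)))
     (kq_add (g x) (g y)))); first by kq.
  by apply: IexD; [apply: g_add | apply: IexD].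
have SZ c x : Iex (g x) -> Iex (g (kq_scale c x)).
  move=> hx; apply: (Iex_by (y := kq_add (kq_sub (g (kq_scale c x)) (kq_scale c (g x)))
     (kq_scale c (g x)))); first by kq.
  by apply: IexD; [apply: g_scale | apply: IexZ].
have SM x y : Iex (g x) -> Iex (g y) -> Iex (g (kq_mul x y)).
  move=> hx hy; apply: (Iex_by (y := kq_add (kq_sub (g (kq_mul x y))
     (kq_add (kq_mul (g x) y) (kq_mul x (g y)))) (kq_add (kq_mul (g x) y) (kq_mul x (g y))))).
    by kq.
  by apply: IexD; [apply: g_leib | apply: IexD; [apply: IexMr | apply: IexMl]].
have Spb : forall p, Iex (g (pb p)).
  elim/pb_ind => [|p c IH].
    have -> : pb 0 = kq0 k by kq.
    exact: g0.
  have -> : pb (p * 'X + c%:P) = kq_add (kq_mul (pb p) (kq_beta k)) (kq_scale c (kq_e2v k)).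
    by kq.
  by apply: (SD _ _); [apply: (SM _ _) | apply: (SZ _ _)].
move=> x.
have -> : x = kq_add (kq_add (kq_add (kq_add (kq_add (kq_scale (kq_e1 x) (kq_e1v k))
  (kq_scale (kq_e3 x) (kq_e3v k))) (pb (kq_B x))) (kq_mul (kq_alpha k) (pb (kq_A x))))
  (kq_mul (pb (kq_G x)) (kq_gamma k)))
  (kq_mul (kq_alpha k) (kq_mul (pb (kq_AG x)) (kq_gamma k))) by kq.
by repeat first [apply: (SD _ _) | apply: (SZ _ _) | apply: (SM _ _) | apply: Spb | assumption].
Qed.

Section Compute.
Variables (b h : {poly k}).
Hypothesis H1 : Iex (g (kq_e1v k)).
Hypothesis H2 : Iex (g (kq_e2v k)).
Hypothesis H3 : Iex (g (kq_e3v k)).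
Hypothesis Ha : Iex (g (kq_alpha k)).
Hypothesis Hb : Iex (kq_sub (g (kq_beta k)) (pb b)).
Hypothesis Hc : Iex (kq_sub (g (kq_gamma k)) (KQ 0 0 0 0 h 0)).

Lemma g_pb v : Iex (kq_sub (g (pb v)) (pb (v^`() * b))).
Proof.
elim/pb_ind: v => [|p c IH].
  have -> : pb 0 = kq0 k by kq.
  rewrite deriv0 mul0r; apply: (Iex_by (y := g (kq0 k))); first by kq.
  exact: g0.
have -> : pb (p * 'X + c%:P) = kq_add (kq_mul (pb p) (kq_beta k)) (kq_scale c (kq_e2v k)).
  by kq.
rewrite derivD derivC derivM derivX addr0 mulr1.
set u := kq_mul (pb p) (kq_beta k); set w := kq_scale c (kq_e2v k).
apply: (Iex_by (y := kq_add (kq_add (kq_add (kq_add (kq_add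
   (kq_sub (g (kq_add u w)) (kq_add (g u) (g w)))
   (kq_sub (g w) (kq_scale c (g (kq_e2v k)))))
   (kq_scale c (g (kq_e2v k))))
   (kq_sub (g u) (kq_add (kq_mul (g (pb p)) (kq_beta k)) (kq_mul (pb p) (g (kq_beta k))))))
   (kq_mul (kq_sub (g (pb p)) (pb (p^`() * b))) (kq_beta k)))
   (kq_mul (pb p) (kq_sub (g (kq_beta k)) (pb b))))).
  by rewrite /u /w /pb; kq.
apply: IexD; last exact: IexMl.
apply: IexD; last exact: IexMr.
apply: IexD; last exact: g_leib.
apply: IexD; last exact: IexZ.
by apply: IexD; [apply: g_add | apply: g_scale].
Qed.

Lemma g_V v : V v -> V (h * v + b * v^`()).
Proof.
move=> Vv.
have hav : Iex (g (kq_avg v)).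
  by apply: g_Iex; apply: gens_Iex; right; right; right; exists v.
set Gh := KQ 0 0 0 0 h 0 : T.
set E := kq_mul (kq_alpha k) (kq_add (kq_mul (pb (v^`() * b)) (kq_gamma k))
   (kq_mul (pb v) Gh)).
have hE : Iex (kq_sub (g (kq_avg v)) E).
  apply: (Iex_by (y := kq_add (kq_add
    (kq_sub (g (kq_avg v)) (kq_add (kq_mul (g (kq_alpha k)) (kq_mul (pb v) (kq_gamma k)))
       (kq_mul (kq_alpha k) (g (kq_mul (pb v) (kq_gamma k))))))
    (kq_mul (g (kq_alpha k)) (kq_mul (pb v) (kq_gamma k))))
    (kq_mul (kq_alpha k) (kq_add (kq_add
      (kq_sub (g (kq_mul (pb v) (kq_gamma k))) (kq_add (kq_mul (g (pb v)) (kq_gamma k))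
         (kq_mul (pb v) (g (kq_gamma k)))))
      (kq_mul (kq_sub (g (pb v)) (pb (v^`() * b))) (kq_gamma k)))
      (kq_mul (pb v) (kq_sub (g (kq_gamma k)) Gh)))))).
    by rewrite /E /Gh /pb; kq.
  apply: IexD; last first.
    apply: IexMl; apply: IexD; last exact: IexMl.
    by apply: IexD; [apply: g_leib | apply: IexMr; apply: g_pb].
  by apply: IexD; [apply: g_leib | apply: IexMr].
have : Iex E.
  apply: (Iex_by (y := kq_sub (g (kq_avg v)) (kq_sub (g (kq_avg v)) E))); first by kq.
  exact: IexB.
case=> _ _ _ _ _ /= hV; apply: (V_eq hV).
rewrite -?mul_polyC ?polyC0 ?polyC1; ring.
Qed.

Lemma g_b0 : (n%:R : k) != 0 -> b`_0 = 0.
Proof.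
move=> hn.
have hn1 : (0 < n)%N by case: n hn => //; rewrite eqxx.
have hX : Iex (pb 'X^n).
  split=> //=; try exact: V0; try exact: dX0.
  by move=> m hm; rewrite coefXn; case: eqP => //; lia.
have hg := g_Iex hX.
have : Iex (pb ('X^n^`() * b)).
  apply: (Iex_by (y := kq_sub (g (pb 'X^n)) (kq_sub (g (pb 'X^n)) (pb ('X^n^`() * b))))).
    by rewrite /pb; kq.
  by apply: IexB => //; apply: g_pb.
case=> _ _ /= hB _ _ _.
have := hB n.-1 ltac:(lia).
rewrite derivXn mulrnAl coefMn coefXnM ltnn subnn => /eqP.
by rewrite -mulr_natr mulf_eq0 (negPf hn) orbF => /eqP.
Qed.
End Compute.
End Der.

Lemma der_minus f a : derI f -> derI (fun x => kq_sub (f x) (br a x)).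
Proof.
case=> hc hl hm; split.
- move=> x y hxy; apply: (Iex_by (y := kq_sub (kq_sub (f x) (f y))
    (br a (kq_sub x y)))); first by rewrite /br; kq.
  apply: IexB; first exact: hc.
  by apply: IexB; [apply: IexMl | apply: IexMr].
- move=> c x y; apply: (Iex_by (y := kq_sub (f (kq_add (kq_scale c x) y))
    (kq_add (kq_scale c (f x)) (f y)))); first by rewrite /br; kq.
  exact: hl.
- move=> x y; apply: (Iex_by (y := kq_sub (f (kq_mul x y))
    (kq_add (kq_mul (f x) y) (kq_mul x (f y))))); first by rewrite /br; kq.
  exact: hm.
Qed.
End Alg.


Inductive six (A B C D E F : Prop) : Prop := Six of A & B & C & D & E & F.

Lemma lin_k (k : fieldType) (u x c : k) : u = 0 -> x = c * u -> x = 0.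
Proof. by move=> -> ->; rewrite mulr0. Qed.

Ltac pring := rewrite -?mul_polyC ?(polyCM, polyCD, polyCN, polyCB, polyC1, polyC0); ring.

Section Spec.
Variables (k : fieldType) (n : nat) (V : {poly k} -> Prop).
Hypothesis Vadd : forall u v, V u -> V v -> V (u + v).
Hypothesis Vscale : forall (c : k) v, V v -> V (c *: v).
Hypothesis VXn : forall w, V (w * 'X^n).
Local Notation T := (kQ k).
Local Notation dX := (@dX k n).
Local Notation Iex := (Iex n V).

Lemma dX_lin1 u p a : dX u -> p = a * u -> dX p.
Proof. by move=> h ->; apply: dXMl. Qed.
Lemma dX_lin2 u v p a b : dX u -> dX v -> p = a * u + b * v -> dX p.
Proof. by move=> hu hv ->; apply: dXD; apply: dXMl. Qed.
Lemma V_lin u w p c : V u -> dX w -> p = c *: u + w -> V p.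
Proof. by move=> hu hw ->; apply: VD_dX => //; apply: Vscale. Qed.

Variable f : T -> T.
Hypothesis hf : derI n V f.

Local Notation e1 := (kq_e1v k).
Local Notation e2 := (kq_e2v k).
Local Notation e3 := (kq_e3v k).
Local Notation al := (kq_alpha k).
Local Notation be := (kq_beta k).
Local Notation ga := (kq_gamma k).

Definition a' : T := KQ 0 0 (- kq_A (f al)) (- kq_A (f e1)) (kq_G (f e3)) (- kq_AG (f e1)).
Definition g' (x : T) : T := kq_sub (f x) (br a' x).

Ltac kl H := first [apply: (lin_k (c:=1) H); ring | apply: (lin_k (c:=-1) H); ring].
Ltac dl H := first [apply: (dX_lin1 (a:=1) H); pring | apply: (dX_lin1 (a:=-1) H); pring].
Ltac d0 := apply: (dX_lin1 (a:=0) (@dX0 k n)); pring.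
Ltac dl2 H1 H2 := first [apply: (dX_lin2 (a:=1) (b:='X) H1 H2); pring |
  apply: (dX_lin2 (a:=-1) (b:=-'X) H1 H2); pring].
Ltac v0 := apply: (V_eq (V0 VXn)); pring.
Ltac vl H W := first [apply: (V_lin (c:=1) H W); pring | apply: (V_lin (c:=-1) H W); pring].

Lemma facts : six (Iex (g' e1)) (Iex (g' e2)) (Iex (g' e3)) (Iex (g' al))
  (Iex (kq_sub (g' be) (pb (kq_B (f be)))))
  (Iex (kq_sub (g' ga) (KQ 0 0 0 0 (kq_G (f ga) + kq_A (f al)) 0))).
Proof.
have E : kq_mul e1 e1 = e1 by kq.
have := leibE hf E; clear E; case=> /= r1a r1b r1c r1d r1e r1f.
have E : kq_mul e2 e2 = e2 by kq.
have := leibE hf E; clear E; case=> /= r2a r2b r2c r2d r2e r2f.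
have E : kq_mul e3 e3 = e3 by kq.
have := leibE hf E; clear E; case=> /= r3a r3b r3c r3d r3e r3f.
have E : kq_mul e1 e2 = kq0 k by kq.
have := leib0 Vadd Vscale hf E; clear E; case=> /= s12a s12b s12c s12d s12e s12f.
have E : kq_mul e2 e3 = kq0 k by kq.
have := leib0 Vadd Vscale hf E; clear E; case=> /= s23a s23b s23c s23d s23e s23f.
have E : kq_mul e1 e3 = kq0 k by kq.
have := leib0 Vadd Vscale hf E; clear E; case=> /= s13a s13b s13c s13d s13e s13f.
have E : kq_mul e1 al = al by kq.
have := leibE hf E; clear E; case=> /= a1a a1b a1c a1d a1e a1f.
have E : kq_mul al e2 = al by kq.
have := leibE hf E; clear E; case=> /= a2a a2b a2c a2d a2e a2f.
have E : kq_mul e2 be = be by kq.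
have := leibE hf E; clear E; case=> /= b1a b1b b1c b1d b1e b1f.
have E : kq_mul be e2 = be by kq.
have := leibE hf E; clear E; case=> /= b2a b2b b2c b2d b2e b2f.
have E : kq_mul e2 ga = ga by kq.
have := leibE hf E; clear E; case=> /= c1a c1b c1c c1d c1e c1f.
have E : kq_mul ga e3 = ga by kq.
have := leibE hf E; clear E; case=> /= c2a c2b c2c c2d c2e c2f.
constructor; split; rewrite /g' /br /a' /pb /=.
- kl r1a. - kl r1b. - dl r1c. - d0. - dl r1e. - v0.
- kl r2a. - kl r2b. - dl r2c. - dl s12d. - dl s23e. - vl r2f (@dX0 k n).
- kl r3a. - kl r3b. - dl r3c. - dl r3d. - d0. - vl s13f (@dX0 k n).
- kl a2a. - kl a1b. - dl a1c. - d0. - dl a1e. - vl a2f s23e.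
- kl b1a. - kl b1b. - d0. - dl2 b1d s12d. - dl2 b2e s23e. - vl b1f (@dX0 k n).
- kl c1a. - kl c1b. - dl c2c. - dl c1d. - d0. - vl c1f s12d.
Qed.

End Spec.

Unset Implicit Arguments.
Theorem mainTheorem18 (k : fieldType) (p : nat) (n d : nat)
  (V : {poly k} -> Prop) (nu : nat -> nat) (P : nat -> {poly k}) :
  p \in [pchar k] ->
  (2 <= n)%N -> (3 <= d)%N ->
  (* V is a k-subspace of k[beta] containing (beta^n) *)
  V 0 -> (forall u v, V u -> V v -> V (u + v)) ->
  (forall (c : k) v, V v -> V (c *: v)) ->
  (forall w, V (w * 'X^n)) ->
  (* p_i = beta^(nu_i) + sum_(j>=1) p_(i,j) beta^(nu_i + j) *)
  (forall i, (1 <= i <= d)%N ->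
     (forall m, (m < nu i)%N -> (P i)`_m = 0) /\ (P i)`_(nu i) = 1) ->
  (* the classes of p_1, ..., p_d form a basis of V/(beta^n) *)
  (forall i, (1 <= i <= d)%N -> V (P i)) ->
  (forall v, V v -> exists (c : nat -> k) (w : {poly k}),
      v = \sum_(1 <= i < d.+1) c i *: P i + w * 'X^n) ->
  (forall (c : nat -> k) (w : {poly k}),
      \sum_(1 <= i < d.+1) c i *: P i = w * 'X^n ->
      forall i, (1 <= i <= d)%N -> c i = 0) ->
  (* 0 = nu_1 < 1 = nu_2 < nu_3 < ... < nu_d *)
  nu 1%N = 0%N -> nu 2%N = 1%N ->
  (forall i, (2 <= i < d)%N -> (nu i < nu i.+1)%N) ->
  (* p_(1,1) = 0 *)
  (P 1%N)`_1 = 0 ->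
  (* nu_d = 1 mod p *)
  nu d = 1 %[mod p] ->
  (* p_(d,1) - p_(2,1) <> 0 *)
  (P d)`_(nu d + 1) - (P 2%N)`_(nu 2%N + 1) != 0 ->
  (* the 2(d-1) integers are pairwise distinct and all < n *)
  (let L := (nu d + 1)%N
            :: [seq (nu d + nu j - 1)%N | j <- iota 3 (d - 2)]
            ++ [seq (nu d + nu j + 1)%N | j <- iota 2 (d - 1)] in
   uniq L /\ all (fun m => (m < n)%N) L) ->
  (n%:R : k) != 0 ->
  HH1_vanishes (I_nnV n V).

Proof.
move=> hp hn2 hd3 V00 Vadd Vscale VXn Pform PV Pspan Pindep nu1 nu2 numon P11 hnud hdiff hL hn.
have [huniq hall] := hL; clear hL.
move=> f hf.
have df := der_of Vadd Vscale VXn hf.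
have [T1 T2 T3 Ta Tb Tc] := facts Vadd Vscale VXn df.
set b := kq_B (f (kq_beta k)) in Tb.
set h := kq_G (f (kq_gamma k)) + kq_A (f (kq_alpha k)) in Tc.
have dg' : derI n V (g' f) := der_minus Vadd Vscale VXn (a' f) df.
have b0 : b`_0 = 0 := g_b0 Vadd Vscale VXn dg' T2 Tb hn.
have VT : forall v, V v -> V (h * v + b * v^`()).
  by move=> v Vv; apply: (g_V Vadd Vscale VXn dg' T2 Ta Tb Tc Vv).
have hnd : (2 * nu d + 1 < n)%N.
  have /allP := hall; move=> /(_ (nu d + nu d + 1)%N) h1.
  suff : (nu d + nu d + 1 < n)%N by lia.
  apply: h1; rewrite inE mem_cat; apply/orP; right; apply/orP; right.
  by apply/mapP; exists d => //; rewrite mem_iota; lia.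
have nud1 : (nu d)%:R = 1 :> k.
  rewrite -(GRing.natr_mod_pchar hp) hnud modn_small //.
  exact: prime_gt1 (GRing.pcharf_prime hp).
have hgap : forall i j, (1 <= i <= d)%N -> (1 <= j <= d)%N -> nu j <> (nu i + 2)%N.
  move=> i j hi hj hij.
  have hj3 : (3 <= j)%N.
    case: (leqP 3 j) => // hj2.
    have := @numono' n d nu nu1 nu2 numon hd3 hnd j 2 ltac:(lia) ltac:(lia) ltac:(lia).
    lia.
  move: huniq; rewrite /= cat_uniq => /andP[hnotin /and3P[_ hhas _]].
  have hx1 : (nu d + nu j - 1)%N \in [seq (nu d + nu j0 - 1)%N | j0 <- iota 3 (d - 2)].
    by apply/mapP; exists j => //; rewrite mem_iota; lia.
  case: (i =P 1%N) => [hi1|hi1].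
    move/negP: hnotin; apply; rewrite mem_cat; apply/orP; left.
    have -> : (nu d + 1 = nu d + nu j - 1)%N by rewrite hij hi1 nu1; lia.
    exact: hx1.
  move/negP: hhas; apply; apply/hasP; exists (nu d + nu j - 1)%N => //.
  apply/mapP; exists i; first by rewrite mem_iota; lia.
  by rewrite hij; lia.
have hdiff' : (P d)`_(nu d + 1) - (P 2%N)`_2 != 0 by rewrite nu2 in hdiff.
have [c [hc hb]] := core Vadd Vscale Pform PV Pspan nu1 nu2 numon hd3 hnd nud1 hdiff' hgap b0 VT.
set z : kQ k := KQ c 0 c%:P 0 0 0.
have dg'' : derI n V (fun x => kq_sub (g' f x) (br z x)) := der_minus Vadd Vscale VXn z dg'.
have Hall := der_closure Vadd Vscale VXn dg''.
exists (kq_add (a' f) z) => x.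
apply/(I_iff Vadd Vscale VXn).
apply: (Iex_by (y := kq_sub (g' f x) (br z x))); first by rewrite /g' /br; kq.
apply: Hall.
- by apply: (Iex_by (y := g' f (kq_e1v k))) => //; rewrite /br; kq.
- by apply: (Iex_by (y := g' f (kq_e2v k))) => //; rewrite /br; kq.
- by apply: (Iex_by (y := g' f (kq_e3v k))) => //; rewrite /br; kq.
- by apply: (Iex_by (y := g' f (kq_alpha k))) => //; rewrite /br; kq.
- apply: (Iex_by (y := kq_add (kq_sub (g' f (kq_beta k)) (pb b)) (pb b))).
    by rewrite /br /pb; kq.
  apply: IexD => //; split => //=; try exact: dX0; try exact: (V0 VXn).
- apply: (Iex_by (y := kq_add (kq_sub (g' f (kq_gamma k)) (KQ 0 0 0 0 h 0))
     (KQ 0 0 0 0 (h - c%:P) 0))).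
    by rewrite /br; kq.
  apply: IexD => //; split => //=; try exact: dX0; try exact: (V0 VXn).
Qed.
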